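(* For the undirected greedy routing network creation game: (i) on any finite point set in $\mathbb R^D$ ($D\ge1$) with the Euclidean metric, every pure Nash equilibrium $\mathbf s$ satisfies $c(\mathbf s)\le\left(2-\frac{1}{K(D)}\right)c(\mathbf s^* )$; (ii) on any finite point set of $n\ge2$ points in an arbitrary metric space, every pure Nash equilibrium $\mathbf s$ satisfies $c(\mathbf s)<2\,c(\mathbf s^* )$. Here $\mathbf s^*$ denotes a social optimum.
   Context: Undirected variant of the game: $\mathcal P$ is a finite set of points (agents) with metric $d$; each agent $u$ chooses a strategy $S_u\subseteq\{\{u,v\}:v\in\mathcal P\setminus\{u\}\}$ of undirected edges, which it owns; a profile $\mathbf s$ induces the network $G(\mathbf s)$ on $\mathcal P$ in which $\{u,v\}$ is an edge iff $\{u,v\}\in S_u\cup S_v$. A greedy routing path from $u$ to $w$ is a path $(x_1=u,\dots,x_j=w)$ in $G(\mathbf s)$ with $d(x_i,w)>d(x_{i+1},w)$ for all $i$; $u$ is greedy connected if it has a greedy routing path to every other agent. The cost of $u$ is $c_u(\mathbf s)=|S_u|$ if $u$ is greedy connected and $\infty$ otherwise; social cost $c(\mathbf s)=\sum_u c_u(\mathbf s)$. A pure Nash equilibrium is a profile where no agent can strictly decrease its cost by a unilateral deviation; a social optimum minimizes social cost. $K(D)$ is the kissing number of $\mathbb R^D$: the maximum number of pairwise disjoint (interior-disjoint) unit balls in $\mathbb R^D$ that can simultaneously touch a fixed unit ball; equivalently, the maximum number of points on the unit sphere of $\mathbb R^D$ with pairwise angular distance at least $60^\circ$. *)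

(* Defs.v *)
From HB Require Import structures.
From mathcomp Require Import all_boot all_order all_algebra.
From Stdlib Require Import ClassicalEpsilon.
Set Implicit Arguments. Unset Strict Implicit. Unset Printing Implicit Defensive.
Import Order.TTheory GRing.Theory Num.Theory.
Local Open Scope ring_scope.

Section Game.
Variables (R : rcfType) (T : finType) (d : T -> T -> R).

(* A strategy of agent u is represented by the set of partners v such that
   u owns the undirected edge {u,v}; a profile assigns a strategy to each agent. *)
Definition profile := T -> {set T}.

Definition valid_strategy (u : T) (S : {set T}) : bool := u \notin S.
Definition valid_profile (s : profile) : Prop := forall u, valid_strategy u (s u).

Definition deviate (s : profile) (u : T) (S : {set T}) : profile :=
  fun x => if x == u then S else s x.

Definition adj (s : profile) (u v : T) : bool := (v \in s u) || (u \in s v).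

(* greedy routing path (x_1 = u, x_2, ..., x_j = w): consecutive vertices adjacent
   and strictly decreasing distance to w; p = [x_2; ...; x_j] *)
Definition greedy_path (s : profile) (u w : T) (p : seq T) : bool :=
  path (fun x y => adj s x y && (d y w < d x w)) u p && (last u p == w).

Definition greedy_connected (s : profile) (u : T) : Prop :=
  forall w, w != u -> exists p, greedy_path s u w p.

(* costs in nat extended with infinity: None = infinity *)
Definition ext_lt (a b : option nat) : Prop :=
  match a, b with
  | Some x, Some y => (x < y)%N
  | Some _, None => True
  | None, _ => False
  end.

Definition agent_cost (s : profile) (u : T) : option nat :=
  if excluded_middle_informative (greedy_connected s u) then Some #|s u| else None.

Definition ext_add (a b : option nat) : option nat :=
  match a, b with Some x, Some y => Some (x + y)%N | _, _ => None end.

Definition social_cost (s : profile) : option nat :=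
  \big[ext_add/Some 0%N]_(u : T) agent_cost s u.

Definition nash_equilibrium (s : profile) : Prop :=
  valid_profile s /\
  forall u S, valid_strategy u S -> ~ ext_lt (agent_cost (deviate s u S) u) (agent_cost s u).

Definition social_optimum (s : profile) : Prop :=
  valid_profile s /\
  forall s', valid_profile s' -> ~ ext_lt (social_cost s') (social_cost s).

End Game.

Definition is_metric (R : rcfType) (T : finType) (d : T -> T -> R) : Prop :=
  (forall x y, 0 <= d x y) /\ (forall x y, d x y = 0 <-> x = y) /\
  (forall x y, d x y = d y x) /\ (forall x y z, d x z <= d x y + d y z).

Definition dotv (R : rcfType) (D : nat) (x y : 'rV[R]_D) : R :=
  \sum_(i < D) x 0 i * y 0 i.

Definition eucl_dist (R : rcfType) (D : nat) (x y : 'rV[R]_D) : R :=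
  Num.sqrt (dotv (x - y) (x - y)).

(* k points on the unit sphere of R^D with pairwise angular distance at least
   60 degrees, i.e. pairwise inner product at most cos 60 = 1/2 *)
Definition kissing_config (R : rcfType) (D k : nat) (x : 'I_k -> 'rV[R]_D) : Prop :=
  (forall i, dotv (x i) (x i) = 1) /\
  (forall i j, i != j -> dotv (x i) (x j) <= 2^-1).

Definition is_kissing_number (R : rcfType) (D K : nat) : Prop :=
  (exists x : 'I_K -> 'rV[R]_D, kissing_config x) /\
  (forall k (x : 'I_k -> 'rV[R]_D), kissing_config x -> (k <= K)%N).

(* Main.v *)
Require Import Defs.
From HB Require Import structures.
From mathcomp Require Import all_boot all_order all_algebra.
From mathcomp Require Import ring lra zify.
From Stdlib Require Import ClassicalEpsilon Classical.
Import Order.TTheory GRing.Theory Num.Theory.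
Set Implicit Arguments. Unset Strict Implicit. Unset Printing Implicit Defensive.
Local Open Scope ring_scope.

Section Generic.
Variables (R : rcfType) (T : finType) (d : T -> T -> R).
Hypothesis Hd : forall u w : T, u != w -> d w w < d u w.

Definition cover_ok (u : T) (A : {set T}) : Prop :=
  forall w, w != u -> exists2 x, x \in A & d x w < d u w.

Definition Nb (s : profile T) u := [set v | adj s u v].
Definition Nin (s : profile T) u := [set v | u \in s v].

Lemma adjC (s : profile T) (u v : T) : adj s u v = adj s v u.
Proof. by rewrite /adj orbC. Qed.

Lemma first_step (s : profile T) u : greedy_connected d s u -> cover_ok u (Nb s u).
Proof.
move=> gc w wu; have [p /andP[pp lp]] := gc w wu.
case: p pp lp => [|x p] /=.
  by move=> _ /eqP wE; rewrite wE eqxx in wu.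
by move=> /andP[/andP[ax dx] _] _; exists x; rewrite ?inE.
Qed.

Lemma path_dev (s : profile T) u S w x p :
  d x w < d u w ->
  path (fun a b => adj s a b && (d b w < d a w)) x p ->
  path (fun a b => adj (deviate s u S) a b && (d b w < d a w)) x p.
Proof.
elim: p x => [//|y p IH] x /= dx /andP[/andP[axy dy] pp].
have xu : (x == u) = false by apply/negbTE/eqP => E; rewrite E ltxx in dx.
have yu : (y == u) = false.
  by apply/negbTE/eqP => E; move: (lt_trans dy dx); rewrite E ltxx.
rewrite /adj /deviate xu yu -/(adj s x y) axy dy /=.
by apply: IH => //; apply: lt_trans dy dx.
Qed.

Lemma dev_connected (s : profile T) u S :
  (forall v, v != u -> greedy_connected d s v) ->
  cover_ok u (Nin s u :|: S) -> greedy_connected d (deviate s u S) u.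
Proof.
move=> gcs cov w wu; have [x xin dx] := cov w wu.
have xu : (x == u) = false by apply/negbTE/eqP => E; rewrite E ltxx in dx.
have aux : adj (deviate s u S) u x.
  rewrite /adj /deviate eqxx xu.
  by move: xin; rewrite !inE => /orP[->|->]; rewrite ?orbT.
case: (eqVneq x w) => [xw|xw].
  by subst w; exists [:: x]; rewrite /greedy_path /= aux dx eqxx.
have wx : w != x by rewrite eq_sym.
have [p /andP[pp lp]] := gcs x (negbT xu) w wx.
exists (x :: p); rewrite /greedy_path /= aux dx lp andbT /=.
exact: path_dev.
Qed.

Lemma dev_full_connected (s : profile T) u :
  greedy_connected d (deviate s u [set v | v != u]) u.
Proof.
move=> w wu; exists [:: w]; rewrite /greedy_path /= eqxx andbT.
rewrite /adj /deviate eqxx inE wu /=.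
by rewrite andbT; apply: Hd; rewrite eq_sym.
Qed.

Lemma agent_costE (s : profile T) u :
  greedy_connected d s u -> agent_cost d s u = Some #|s u|.
Proof. by rewrite /agent_cost; case: excluded_middle_informative. Qed.

Lemma ne_connected (s : profile T) :
  nash_equilibrium d s -> forall u, greedy_connected d s u.
Proof.
move=> [vs ne] u.
have := ne u [set v | v != u]; rewrite /valid_strategy inE eqxx => /(_ isT).
rewrite (agent_costE (@dev_full_connected s u)) /agent_cost.
by case: excluded_middle_informative => // _ /(_ I).
Qed.

Lemma ne_bound (s : profile T) u S :
  nash_equilibrium d s -> cover_ok u (Nin s u :|: S) -> (#|s u| <= #|S|)%N.
Proof.
move=> nes cov; have gcs := ne_connected nes.
have [_ ne] := nes.
have vS : valid_strategy u (S :\ u) by rewrite /valid_strategy !inE eqxx.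
have cov' : cover_ok u (Nin s u :|: (S :\ u)).
  move=> w wu; have [x xin dx] := cov w wu.
  have xu : x != u by apply/eqP => E; rewrite E ltxx in dx.
  by exists x => //; move: xin; rewrite !inE xu.
have gc := dev_connected (fun v _ => gcs v) cov'.
have := ne u _ vS; rewrite (agent_costE gc) (agent_costE (gcs u)) /= => H.
have H2 : (#|s u| <= #|S :\ u|)%N by rewrite leqNgt; apply/negP; rewrite /deviate eqxx in H.
apply: leq_trans H2 _; apply: subset_leq_card; apply/subsetP=> x; rewrite inE => /andP[] //.
Qed.

Lemma social_some (s : profile T) (f : T -> nat) :
  (forall u, agent_cost d s u = Some (f u)) -> social_cost d s = Some (\sum_u f u)%N.
Proof.
move=> H; rewrite /social_cost.
apply: (big_rec2 (fun a b => a = Some b)) => // i a b _ ->.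
by rewrite H.
Qed.

Lemma social_some_inv (s : profile T) c :
  social_cost d s = Some c -> forall u, greedy_connected d s u.
Proof.
move=> H u; apply: NNPP => ngc.
have Hu : agent_cost d s u = None by rewrite /agent_cost; case: excluded_middle_informative.
suff : forall r, u \in r -> \big[@ext_add/Some 0%N]_(v <- r) agent_cost d s v = None.
  by move=> /(_ _ (mem_index_enum u)); rewrite -/(social_cost d s) H.
elim=> [//|v r IH]; rewrite inE big_cons => /orP[/eqP <-|ur].
  by rewrite Hu.
by rewrite IH //; case: (agent_cost d s v).
Qed.

Definition sfull : profile T := fun u => [set v | v != u].

Lemma sfull_valid : valid_profile sfull.
Proof. by move=> u; rewrite /valid_strategy inE eqxx. Qed.

Lemma sfull_connected u : greedy_connected d sfull u.
Proof.
move=> w wu; exists [:: w]; rewrite /greedy_path /= eqxx andbT.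
by rewrite /adj inE wu /= andbT; apply: Hd; rewrite eq_sym.
Qed.

Lemma opt_finite (s : profile T) :
  social_optimum d s -> forall u, greedy_connected d s u.
Proof.
move=> [vs opt].
have := opt sfull sfull_valid.
rewrite (social_some (f := fun u => #|sfull u|)); last by move=> u; rewrite agent_costE //; apply: sfull_connected.
case E : (social_cost d s) => [c|] /=; first by move=> _; exact: social_some_inv E.
by move=> /(_ I).
Qed.

Lemma cost_some (s : profile T) :
  (forall u, greedy_connected d s u) -> social_cost d s = Some (\sum_u #|s u|)%N.
Proof. by move=> H; apply: social_some => u; apply: agent_costE. Qed.

End Generic.

Section Counting.
Variables (R : rcfType) (T : finType) (d : T -> T -> R).
Hypothesis Hd : forall u w : T, u != w -> d w w < d u w.
Variable nn : T -> T.
Hypothesis nn_neq : forall w, nn w != w.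
Hypothesis nn_min : forall w x, x != w -> d (nn w) w <= d x w.

Lemma necessary (s : profile T) w :
  greedy_connected d s (nn w) -> adj s (nn w) w.
Proof.
move=> gc; have wn : w != nn w by rewrite eq_sym nn_neq.
have [p /andP[pp lp]] := gc w wn.
case: p pp lp => [|x p] /=; first by move=> _ /eqP E; rewrite E eqxx in wn.
move=> /andP[/andP[ax dx] _] _.
have [xw|xw] := eqVneq x w; first by subst w.
by have := nn_min xw; rewrite leNgt dx.
Qed.

Lemma cover_nn (F : T -> {set T}) :
  (forall u, cover_ok d u (F u)) -> forall w, w \in F (nn w).
Proof.
move=> cov w; have wn : w != nn w by rewrite eq_sym nn_neq.
have [x xin dx] := cov _ w wn.
have [xw|xw] := eqVneq x w; first by subst w.
by have := nn_min xw; rewrite leNgt dx.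
Qed.

Definition Enn := [set [set w; nn w] | w : T].

Lemma card_pairs (P : T -> T -> bool) :
  (\sum_u #|[set v | P u v]|)%N = #|[set p : T * T | P p.1 p.2]|.
Proof.
have E1 : forall u, #|[set v | P u v]| = (\sum_v (P u v : nat))%N.
  move=> u; rewrite -sum1_card big_mkcond /=; apply: eq_bigr => v _.
  by rewrite inE; case: (P u v).
have E2 : #|[set p : T * T | P p.1 p.2]| = (\sum_(p : T * T) (P p.1 p.2 : nat))%N.
  rewrite -sum1_card big_mkcond /=; apply: eq_bigr => p _.
  by rewrite inE; case: (P p.1 p.2).
rewrite E2 (eq_bigr _ (fun u _ => E1 u)).
by rewrite pair_big.
Qed.

Lemma count_pairs (s : profile T) (F : T -> {set T}) :
  (forall w, nn w \in F w) -> (forall w, w \in F (nn w)) ->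
  (forall w, adj s (nn w) w) ->
  (#|Enn| <= \sum_u #|F u :&: Nin s u|)%N.
Proof.
move=> h1 h2 h3.
have -> : (\sum_u #|F u :&: Nin s u| = \sum_u #|[set v | (v \in F u) && (u \in s v)]|)%N.
  by apply: eq_bigr => u _; apply: eq_card => v; rewrite !inE.
rewrite card_pairs.
set P := [set p : T * T | _].
apply: leq_trans (leq_imset_card (fun p : T * T => [set p.1; p.2]) P).
apply: subset_leq_card; apply/subsetP => e /imsetP[w _ ->].
have := h3 w; rewrite /adj => /orP[wi|ni].
  apply/imsetP; exists (w, nn w) => //; by rewrite inE /= h1.
apply/imsetP; exists (nn w, w); first by rewrite inE /= h2.
by apply/setP => z; rewrite /= !inE orbC.
Qed.

Lemma card_T_Enn : (#|T| <= 2 * #|Enn|)%N.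
Proof.
have -> : #|T| = (\sum_(w : T) 1)%N by rewrite sum1_card.
rewrite (partition_big (fun w => [set w; nn w]) (fun e => e \in Enn)) /=; last first.
  by move=> w _; apply/imsetP; exists w.
rewrite mulnC -sum_nat_const; apply: leq_sum => e /imsetP[w0 _ Ee].
rewrite sum1_card.
apply: leq_trans (_ : #|e| <= 2)%N.
  apply: subset_leq_card; apply/subsetP => w.
  move=> H; have /eqP <- : [set w; nn w] == e := H.
  by rewrite !inE eqxx.
by rewrite Ee cards2; case: (_ != _).
Qed.

Lemma sum_bound (s : profile T) (F : T -> {set T}) :
  nash_equilibrium d s -> (forall u, cover_ok d u (F u)) -> (forall w, nn w \in F w) ->
  (\sum_u #|s u| + #|Enn| <= \sum_u #|F u|)%N.
Proof.
move=> nes cov h1; have gcs := ne_connected Hd nes.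
have per : forall u, (#|s u| + #|F u :&: Nin s u| <= #|F u|)%N.
  move=> u.
  have cov' : cover_ok d u (Nin s u :|: (F u :\: Nin s u)).
    move=> w wu; have [x xi dx] := cov u w wu; exists x => //.
    by rewrite !inE xi; case: (u \in s x).
  have := ne_bound Hd nes cov'.
  rewrite -(cardsID (Nin s u) (F u)) => H.
  by rewrite addnC leq_add2l.
apply: leq_trans (leq_add (leqnn _) (count_pairs h1 (cover_nn cov) (fun w => necessary (gcs (nn w))))) _.
by rewrite -big_split; apply: leq_sum => u _.
Qed.

Lemma card_sum (A : {set T}) : #|A| = (\sum_v (v \in A : nat))%N.
Proof. by rewrite -sum1_card big_mkcond /=; apply: eq_bigr => v _; case: (v \in A). Qed.

Lemma Nb_bound (s : profile T) :
  (\sum_u #|Nb s u| <= 2 * \sum_u #|s u|)%N.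
Proof.
have H : forall u, (#|Nb s u| <= #|s u| + #|Nin s u|)%N.
  move=> u; apply: leq_trans (leq_card_setU _ _); apply: subset_leq_card.
  by apply/subsetP => v; rewrite !inE /adj.
apply: (@leq_trans (\sum_u (#|s u| + #|Nin s u|))%N); first by apply: leq_sum => u _.
rewrite big_split /= mul2n -addnn leq_add2l.
rewrite (eq_bigr _ (fun u _ => card_sum (Nin s u))) exchange_big /=.
rewrite leq_eqVlt; apply/orP; left; apply/eqP; apply: eq_bigr => v _.
by rewrite card_sum; apply: eq_bigr => u _; rewrite inE.
Qed.

Lemma generic_ii (s sopt : profile T) :
  nash_equilibrium d s -> social_optimum d sopt ->
  (\sum_u #|s u| + #|Enn| <= 2 * \sum_u #|sopt u|)%N.
Proof.
move=> nes opt; have gco := opt_finite Hd opt.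
apply: leq_trans (Nb_bound sopt).
apply: sum_bound => //.
  by move=> u; apply: first_step.
by move=> w; rewrite inE adjC; apply: necessary.
Qed.

End Counting.

Lemma nn_exists (R : rcfType) (T : finType) (d : T -> T -> R) :
  (1 < #|T|)%N -> exists nn : T -> T,
    (forall w, nn w != w) /\ (forall w x, x != w -> d (nn w) w <= d x w).
Proof.
move=> hT.
have H : forall w, exists v, v != w /\ forall x, x != w -> d v w <= d x w.
  move=> w.
  have : (0 < #|[set~ w]|)%N by rewrite cardsC1; case: #|T| hT.
  case/card_gt0P => v0; rewrite !inE => v0w.
  case: (@arg_minP _ R T v0 (fun v => v != w) (fun v => d v w) v0w) => v vw vmin.
  by exists v; split.
exists (fun w => proj1_sig (constructive_indefinite_description _ (H w))).
split => w; case: (constructive_indefinite_description _ (H w)) => v [] //=.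
Qed.

Section Eucl.
Variables (R : rcfType) (D : nat).
Implicit Types a b : 'rV[R]_D.

Lemma dotvC a b : dotv a b = dotv b a.
Proof. by rewrite /dotv; apply: eq_bigr => i _; rewrite mulrC. Qed.

Lemma dotv_ge0 a : 0 <= dotv a a.
Proof. by rewrite /dotv; apply: sumr_ge0 => i _; rewrite -expr2 sqr_ge0. Qed.

Lemma dotv_eq0 a : dotv a a = 0 -> a = 0.
Proof.
move=> H; apply/rowP => i; rewrite mxE.
have h0 : forall j, predT j -> 0 <= a 0 j * a 0 j by move=> j _; rewrite -expr2 sqr_ge0.
have /eqP := @psumr_eq0P _ _ predT (fun i => a 0 i * a 0 i) h0 H i isT.
by rewrite mulf_eq0 orbb => /eqP.
Qed.

Lemma dotvZ c c' a b : dotv (c *: a) (c' *: b) = c * c' * dotv a b.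
Proof.
rewrite /dotv mulr_sumr; apply: eq_bigr => i _; rewrite !mxE; ring.
Qed.

Lemma dotvN a : dotv (- a) (- a) = dotv a a.
Proof. by rewrite /dotv; apply: eq_bigr => i _; rewrite !mxE mulrNN. Qed.

Lemma dotvB a b : dotv (a - b) (a - b) = dotv a a - 2 * dotv a b + dotv b b.
Proof.
rewrite /dotv mulr_sumr -sumrB -big_split /=; apply: eq_bigr => i _; rewrite !mxE; ring.
Qed.
End Eucl.

Section Geom.
Variables (R : rcfType) (D K : nat) (T : finType) (pt : T -> 'rV[R]_D).
Hypothesis pt_inj : injective pt.
Hypothesis HK : is_kissing_number R D K.

Let d := fun u v => eucl_dist (pt u) (pt v).
Let N (a : 'rV[R]_D) := dotv a a.

Lemma d_sym u v : d u v = d v u.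
Proof. by rewrite /d /eucl_dist -opprB dotvN. Qed.

Lemma Hd_e : forall u w : T, u != w -> d w w < d u w.
Proof.
move=> u w uw; rewrite /d /eucl_dist subrr.
have -> : dotv (0 : 'rV[R]_D) 0 = 0 by rewrite /dotv big1 // => i _; rewrite mxE mul0r.
rewrite sqrtr0 sqrtr_gt0 lt_def dotv_ge0 andbT.
apply/eqP => /dotv_eq0 /eqP; rewrite subr_eq0 => /eqP /pt_inj E.
by rewrite E eqxx in uw.
Qed.

Lemma unit_scale (a : 'rV[R]_D) : 0 < N a -> N ((Num.sqrt (N a))^-1 *: a) = 1.
Proof.
move=> Na; rewrite /N dotvZ -/(N a) -expr2 exprVn sqr_sqrtr ?ltW //.
by rewrite mulVf // gt_eqF.
Qed.

Lemma pair_scale (a b : 'rV[R]_D) : 0 < N a -> 0 < N b ->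
  2 * dotv a b <= N a -> 2 * dotv a b <= N b ->
  dotv ((Num.sqrt (N a))^-1 *: a) ((Num.sqrt (N b))^-1 *: b) <= 2^-1.
Proof.
move=> Na Nb h1 h2; rewrite dotvZ.
set A := Num.sqrt (N a); set B := Num.sqrt (N b).
have A0 : 0 < A by rewrite sqrtr_gt0.
have B0 : 0 < B by rewrite sqrtr_gt0.
have EA : N a = A * A by rewrite -expr2 sqr_sqrtr ?ltW.
have EB : N b = B * B by rewrite -expr2 sqr_sqrtr ?ltW.
have key : 2 * dotv a b <= A * B.
  case: (lerP A B) => AB.
    apply: le_trans h1 _; rewrite EA; apply: ler_wpM2l => //; exact: ltW.
  apply: le_trans h2 _; rewrite EB mulrC; apply: ler_wpM2r => //; [exact: ltW | exact: ltW].
have AB0 : 0 < A * B by rewrite mulr_gt0.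
have E : A^-1 * B^-1 * dotv a b = (2 * dotv a b) / (2 * (A * B)).
  by field; rewrite !gt_eqF.
rewrite E ler_pdivrMr; last by rewrite mulr_gt0.
set P := A * B in key AB0 *; set q := dotv a b in key *.
lra.
Qed.

Lemma good_pair (x y : T) (u : T) : x != u -> y != u ->
  d u x <= d x y -> d u y <= d x y ->
  let a := pt x - pt u in let b := pt y - pt u in
  2 * dotv a b <= N a /\ 2 * dotv a b <= N b.
Proof.
move=> xu yu h1 h2 a b.
have Eab : pt x - pt y = a - b by rewrite /a /b opprB addrA subrK.
have Eux : pt u - pt x = - a by rewrite /a opprB.
have Euy : pt u - pt y = - b by rewrite /b opprB.
have Eba : pt y - pt x = b - a by rewrite /a /b opprB addrA subrK.
move: h2; rewrite (d_sym x y) => h2.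
move: h1 h2; rewrite /d /eucl_dist Eab Eba Eux Euy.
rewrite !dotvN !ler_sqrt ?dotv_ge0 // (dotvB a b) (dotvB b a) (dotvC b a) /N => h1 h2.
by split; lra.
Qed.

Variable nn : T -> T.
Hypothesis nn_neq : forall w, nn w != w.
Hypothesis nn_min : forall w x, x != w -> d (nn w) w <= d x w.
Variable u : T.

Definition uncov (A : {set T}) := [set w | (w != u) && [forall x in A, d u w <= d x w]].
Definition good (A : {set T}) := forall x y, x \in A -> y \in A -> x != y -> d u x <= d x y.
Definition Inv (A : {set T}) := [/\ u \notin A, good A, nn u \in A &
   forall w x, w \in uncov A -> x \in A -> d u x <= d u w].

Lemma uncov_sub (A B : {set T}) : A \subset B -> uncov B \subset uncov A.
Proof.
move=> /subsetP AB; apply/subsetP => w; rewrite !inE => /andP[-> /forallP f] /=.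
by apply/forallP => x; apply/implyP => xA; apply: (implyP (f x)); apply: AB.
Qed.

Lemma inv_step A : Inv A -> uncov A != set0 ->
  exists A', Inv A' /\ (#|uncov A'| < #|uncov A|)%N.
Proof.
move=> [uA gA nA iA] /set0Pn [w1 w1in].
case: (@arg_minP _ R T w1 (fun w => w \in uncov A) (fun w => d u w) w1in) => w0 w0in w0min.
have := w0in; rewrite inE => /andP[w0u /forallP w0f].
exists (w0 |: A); split; first split.
- by rewrite !inE negb_or eq_sym w0u uA.
- move=> x y; rewrite !inE => /orP[/eqP->|xA] /orP[/eqP->|yA] xy.
  + by rewrite eqxx in xy.
  + by have := implyP (w0f y) yA; rewrite (d_sym y w0).
  + exact: le_trans (iA w0 x w0in xA) (implyP (w0f x) xA).
  + exact: gA.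
- by rewrite inE nA orbT.
- move=> w x win; have wA : w \in uncov A.
    by apply: (subsetP (uncov_sub (subsetUr [set w0] A))).
  rewrite !inE => /orP[/eqP->|xA]; first exact: w0min.
  exact: iA.
apply: proper_card; rewrite properE (uncov_sub (subsetUr _ _)) /=.
apply/subsetPn; exists w0 => //; rewrite inE w0u /=; apply/negP => /forallP /(_ w0).
rewrite !inE eqxx /= => h.
have uw0 : u != w0 by rewrite eq_sym.
by have := Hd_e uw0; rewrite ltNge h.
Qed.

Lemma inv_final : exists A, Inv A /\ uncov A = set0.
Proof.
have I0 : Inv [set nn u].
  split.
  - by rewrite inE eq_sym nn_neq.
  - by move=> x y; rewrite !inE => /eqP -> /eqP ->; rewrite eqxx.
  - by rewrite inE.
  - move=> w x; rewrite !inE => /andP[wu _] /eqP ->.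
    by rewrite d_sym (d_sym u w); apply: nn_min.
suff H : forall n A, (#|uncov A| <= n)%N -> Inv A -> exists A', Inv A' /\ uncov A' = set0.
  exact: (H _ _ (leqnn _) I0).
elim=> [|n IH] A hn iA.
  by exists A; split => //; apply/eqP; rewrite -cards_eq0 -leqn0.
case: (eqVneq (uncov A) set0) => [E|ne]; first by exists A.
have [A' [iA' lt]] := inv_step iA ne.
apply: (IH A') => //; rewrite -ltnS; exact: leq_trans lt hn.
Qed.

Lemma good_card (A : {set T}) : u \notin A -> good A -> (#|A| <= K)%N.
Proof.
move=> uA gA.
pose a (i : 'I_#|A|) := pt (@enum_val T (mem A) i) - pt u.
pose x (i : 'I_#|A|) := (Num.sqrt (N (a i)))^-1 *: a i.
have ne_u : forall i, @enum_val T (mem A) i != u.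
  by move=> i; apply/eqP => E; move: (@enum_valP T (mem A) i); rewrite E (negbTE uA).
have Npos : forall i, 0 < N (a i).
  move=> i; rewrite lt_def dotv_ge0 andbT; apply/eqP => /dotv_eq0 /eqP.
  rewrite subr_eq0 => /eqP /pt_inj E; by have := ne_u i; rewrite E eqxx.
apply: (HK.2 _ x); split.
  by move=> i; apply: unit_scale.
move=> i j ij.
have vij : @enum_val T (mem A) i != @enum_val T (mem A) j.
  by apply: contra ij => /eqP /enum_val_inj ->.
have vji : @enum_val T (mem A) j != @enum_val T (mem A) i by rewrite eq_sym.
have g2 := gA _ _ (enum_valP j) (enum_valP i) vji.
rewrite [X in _ <= X]d_sym in g2.
have [h1 h2] := good_pair (ne_u i) (ne_u j) (gA _ _ (enum_valP i) (enum_valP j) vij) g2.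
exact: pair_scale.
Qed.

Lemma cover_exists : exists G : {set T},
  [/\ cover_ok d u G, nn u \in G & (#|G| <= K)%N].
Proof.
have [A [[uA gA nA _] E]] := inv_final.
exists A; split => //; last exact: good_card.
move=> w wu.
have : w \notin uncov A by rewrite E inE.
rewrite inE wu /= negb_forall => /existsP [x]; rewrite negb_imply => /andP[xA].
by rewrite -ltNge => h; exists x.
Qed.

End Geom.

Unset Implicit Arguments.

Theorem mainTheorem14 (R : rcfType) :
  (* (i) finite point sets in R^D with the Euclidean metric *)
  (forall (D K : nat) (T : finType) (pt : T -> 'rV[R]_D),
     (1 <= D)%N -> injective pt -> is_kissing_number R D K ->
     let d := fun u v => eucl_dist (pt u) (pt v) in
     forall s sopt : profile T,
       nash_equilibrium d s -> social_optimum d sopt ->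
       exists c copt : nat,
         social_cost d s = Some c /\ social_cost d sopt = Some copt /\
         (c%:R : R) <= (2 - (K%:R)^-1) * copt%:R)
  /\
  (* (ii) finite point sets of n >= 2 points in an arbitrary metric space *)
  (forall (T : finType) (d : T -> T -> R),
     is_metric d -> (2 <= #|T|)%N ->
     forall s sopt : profile T,
       nash_equilibrium d s -> social_optimum d sopt ->
       exists c copt : nat,
         social_cost d s = Some c /\ social_cost d sopt = Some copt /\
         (c < 2 * copt)%N).
Proof.
split.
- move=> D K T pt _ inj HK d s sopt nes opt.
  have Hd : forall u w : T, u != w -> d w w < d u w := Hd_e inj.
  have gcs := ne_connected Hd nes; have gco := opt_finite Hd opt.
  exists (\sum_u #|s u|)%N, (\sum_u #|sopt u|)%N.
  split; first exact: cost_some.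
  split; first exact: cost_some.
  set c := (\sum_u #|s u|)%N; set copt := (\sum_u #|sopt u|)%N.
  case: (leqP #|T| 1) => hT.
    have c0 : c = 0%N.
      rewrite /c big1 // => u _; apply/eqP; rewrite -leqn0.
      have [vs _] := nes.
      apply: leq_trans (_ : #|[set~ u]| <= 0)%N.
        apply: subset_leq_card; apply/subsetP => v vin; rewrite !inE.
        by apply/eqP => E; rewrite E in vin; have := vs u; rewrite /valid_strategy vin.
      by rewrite cardsC1; case: #|T| hT => [|[]].
    rewrite c0 mulr_ge0 //.
    case: K HK => [|k] _; first by rewrite invr0 subr0.
    rewrite subr_ge0; apply: le_trans (_ : 1 <= 2); last by rewrite ler1n.
    by rewrite invf_le1 // ?ler1n ?ltr0n.
  have [nn [nn_neq nn_min]] := nn_exists d hT.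
  have h2 := generic_ii Hd nn_neq nn_min nes opt.
  have hn := card_T_Enn nn.
  have Gex : forall u, exists G : {set T}, [/\ cover_ok d u G, nn u \in G & (#|G| <= K)%N].
    move=> u; have H := cover_exists inj HK nn_neq nn_min u; exact H.
  pose G u := proj1_sig (constructive_indefinite_description _ (Gex u)).
  have GP : forall u, [/\ cover_ok d u (G u), nn u \in G u & (#|G u| <= K)%N].
    by move=> u; rewrite /G; case: constructive_indefinite_description.
  have Gc : forall u, cover_ok d u (G u) by move=> u; case: (GP u).
  have Gn : forall u, nn u \in G u by move=> u; case: (GP u).
  have GK : forall u, (#|G u| <= K)%N by move=> u; case: (GP u).
  have h1 := sum_bound Hd nn_neq nn_min nes Gc Gn.
  have h3 : (\sum_u #|G u| <= #|T| * K)%N.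
    rewrite -sum_nat_const; apply: leq_sum => u _; exact: GK.
  rewrite -/c -/copt in h1 h2.
  set m := #|Enn nn| in h1 h2 hn.
  set n := #|T| in h3 hn.
  have h13 := leq_trans h1 h3.
  clear h1 h3 GK GP Gex Gn Gc G.
  case: K HK h13 => [|k] _ h3.
    rewrite invr0 subr0 -natrM ler_nat; lia.
  have hn2 : (n * k.+1 <= 2 * m * k.+1)%N by rewrite leq_mul2r hn orbT.
  have h4 : ((2 * k.+1 - 1) * (c + m) <= (2 * k.+1 - 1) * (2 * copt))%N.
    by rewrite leq_mul2l h2 orbT.
  have key : (k.+1 * c + copt <= 2 * k.+1 * copt)%N by nia.
  have kpos : (0 : R) < k.+1%:R by rewrite ltr0n.
  rewrite -(ler_pM2l kpos).
  have -> : k.+1%:R * ((2 - k.+1%:R^-1) * copt%:R) = 2 * k.+1%:R * copt%:R - copt%:R :> R.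
    by field; rewrite addrC natr1 pnatr_eq0.
  move: key; rewrite -(ler_nat R) natrD !natrM.
  set a := (k.+1)%:R; set b := c%:R; set e := copt%:R.
  by lra.
- move=> T d [d0 [d1 [dsym _]]] hT s sopt nes opt.
  have Hd : forall u w : T, u != w -> d w w < d u w.
    move=> u w uw; have -> : d w w = 0 by apply/d1.
    rewrite lt_def d0 andbT; apply/eqP => /d1 E; by rewrite E eqxx in uw.
  have gcs := ne_connected Hd nes; have gco := opt_finite Hd opt.
  exists (\sum_u #|s u|)%N, (\sum_u #|sopt u|)%N.
  split; first exact: cost_some.
  split; first exact: cost_some.
  have [nn [nn_neq nn_min]] := nn_exists d hT.
  have h2 := generic_ii Hd nn_neq nn_min nes opt.
  have hn := card_T_Enn nn.
  move: h2 hn hT; set m := #|Enn nn|; set n := #|T|; lia.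
Qed.
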